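(* Let $\sigma\in C^1([0,\infty))$ be a nonnegative function and $u_*\in(0,\infty]$ such that $\sigma(s)=0$ for $s\ge u_*$, $\sigma(s)>0$ for $0\le s<u_*$, $\sigma$ is monotone decreasing on $[0,u_* )$, $\|\sigma\|_{C^1([0,u_*])}\le\mu<\infty$, and $\int_0^{u_*}\frac{ds}{\sigma(s)}=\infty$. Let $F(u):=\int_0^u\frac{ds}{\sigma(s)}$ for $u\in[0,u_* )$ (so $F$ maps $[0,u_* )$ onto $[0,\infty)$) and define $a(v):=\sigma(F^{-1}(v))$ for $v\in[0,\infty)$. Then $a$ is strictly positive and monotone decreasing, and for all $v\ge0$ and $y$ with $v+y\ge 0$, $$e^{-\mu|y|}\le\frac{a(v+y)}{a(v)}\le e^{\mu|y|}.$$ Moreover, for any $p\ge 2$, $$\frac{a(v)}{v^p}\int_0^v\frac{s^{p-2}}{a(s)}\,ds\longrightarrow 0\quad\text{as } v\to\infty.$$ *)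

(* Defs.v *)
From Stdlib Require Import Reals ClassicalEpsilon.
From Coquelicot Require Import Coquelicot.
Open Scope R_scope.

Definition has_deriv_nonneg (f f' : R -> R) (x : R) : Prop :=
  forall eps : R, 0 < eps -> exists delta : R, 0 < delta /\
    forall y : R, 0 <= y -> Rabs (y - x) < delta ->
      Rabs (f y - f x - f' x * (y - x)) <= eps * Rabs (y - x).

Definition cont_nonneg (g : R -> R) (x : R) : Prop :=
  forall eps : R, 0 < eps -> exists delta : R, 0 < delta /\
    forall y : R, 0 <= y -> Rabs (y - x) < delta -> Rabs (g y - g x) < eps.

Definition C1_nonneg (f f' : R -> R) : Prop :=
  forall x : R, 0 <= x -> has_deriv_nonneg f f' x /\ cont_nonneg f' x.

Definition Fsig (sigma : R -> R) (u : R) : R := RInt (fun s => / sigma s) 0 u.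

(* F^{-1}(v): the u in [0, u_* ) with F(u) = v (unique under the hypotheses). *)
Definition Finv (sigma : R -> R) (ustar : Rbar) (v : R) : R :=
  epsilon (inhabits 0)
    (fun u => 0 <= u /\ Rbar_lt u ustar /\ Fsig sigma u = v).

Definition a_of (sigma : R -> R) (ustar : Rbar) (v : R) : R :=
  sigma (Finv sigma ustar v).

(* Main.v *)
Require Import Defs.
From Stdlib Require Import Reals ClassicalEpsilon.
From Coquelicot Require Import Coquelicot.
Open Scope R_scope.
From Stdlib Require Import Lra.
Lemma cont_of_eps (f : R -> R) x :
  (forall eps, 0 < eps -> exists delta, 0 < delta /\
     forall y, Rabs (y - x) < delta -> Rabs (f y - f x) < eps) ->
  continuous f x.
Proof.
  intros H. apply continuity_pt_filterlim.
  intros eps Heps. destruct (H eps Heps) as [d [Hd Hy]].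
  exists d; split; [lra|]. intros y [_ Hy2]. apply Hy. exact Hy2.
Qed.

Lemma eps_of_cont (f : R -> R) x : continuous f x ->
  forall eps, 0 < eps -> exists delta, 0 < delta /\
     forall y, Rabs (y - x) < delta -> Rabs (f y - f x) < eps.
Proof.
  intros H. apply continuity_pt_filterlim in H.
  intros eps Heps. destruct (H eps Heps) as [d [Hd Hy]].
  exists d; split; [lra|]. intros y Hyd.
  destruct (Req_dec y x) as [->|Hne].
  - rewrite Rminus_eq_0, Rabs_R0; lra.
  - apply Hy. split; [split; [exact I| auto] | exact Hyd].
Qed.

Definition ext0 (f : R -> R) (z : R) : R := f (Rmax 0 z).

Lemma Rmax0_dist x y : 0 <= x -> Rabs (Rmax 0 y - x) <= Rabs (y - x).
Proof.
  intros Hx. unfold Rmax; destruct (Rle_dec 0 y).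
  - lra.
  - rewrite !Rabs_left1 by lra. lra.
Qed.

Lemma deriv_cont f f' x : 0 <= x -> has_deriv_nonneg f f' x ->
  continuous (ext0 f) x.
Proof.
  intros Hx Hd. apply cont_of_eps. intros eps Heps.
  destruct (Hd 1 Rlt_0_1) as [d [Hd0 Hdy]].
  exists (Rmin d (eps / (Rabs (f' x) + 2))). split.
  { apply Rmin_pos; [lra|]. apply Rdiv_lt_0_compat; [lra|].
    pose proof (Rabs_pos (f' x)); lra. }
  intros y Hy. unfold ext0.
  rewrite (Rmax_right 0 x Hx).
  pose proof (Rmax0_dist x y Hx) as Hm.
  set (z := Rmax 0 y) in *.
  assert (Hz : 0 <= z) by apply Rmax_l.
  assert (Hzd : Rabs (z - x) < d).
  { pose proof (Rmin_l d (eps / (Rabs (f' x) + 2))). lra. }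
  specialize (Hdy z Hz Hzd).
  assert (Hze : Rabs (z - x) < eps / (Rabs (f' x) + 2)).
  { pose proof (Rmin_r d (eps / (Rabs (f' x) + 2))). lra. }
  assert (Hb : Rabs (f z - f x) <= (Rabs (f' x) + 1) * Rabs (z - x)).
  { replace (f z - f x) with ((f z - f x - f' x * (z - x)) + f' x * (z - x)) by ring.
    eapply Rle_trans; [apply Rabs_triang|]. rewrite Rabs_mult. lra. }
  assert (Hpos : 0 < Rabs (f' x) + 2) by (pose proof (Rabs_pos (f' x)); lra).
  apply Rlt_le_trans with ((Rabs (f' x) + 2) * (eps / (Rabs (f' x) + 2))).
  2:{ right; field; lra. }
  pose proof (Rabs_pos (z - x)).
  destruct (Req_dec (Rabs (z - x)) 0) as [E|E].
  - rewrite E in Hb. apply Rle_lt_trans with 0; [lra|].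
    apply Rmult_lt_0_compat; [lra|]. apply Rdiv_lt_0_compat; lra.
  - apply Rle_lt_trans with ((Rabs (f' x) + 1) * Rabs (z - x)); [exact Hb|].
    apply Rle_lt_trans with ((Rabs (f' x) + 2) * Rabs (z - x)).
    + apply Rmult_le_compat_r; lra.
    + apply Rmult_lt_compat_l; lra.
Qed.

Lemma deriv_int f f' x : 0 < x -> has_deriv_nonneg f f' x ->
  is_derive (ext0 f) x (f' x).
Proof.
  intros Hx Hd. apply is_derive_Reals. intros eps Heps.
  destruct (Hd (eps/2) ltac:(lra)) as [d [Hd0 Hdy]].
  assert (Hmp : 0 < Rmin d x) by (apply Rmin_pos; lra).
  exists (mkposreal _ Hmp). intros h Hh0 Hh. simpl in Hh.
  pose proof (Rmin_l d x). pose proof (Rmin_r d x).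
  unfold ext0. assert (Hxh : 0 <= x + h).
  { destruct (Rcase_abs h); [rewrite Rabs_left in Hh by lra|]; lra. }
  rewrite (Rmax_right 0 (x+h)) by lra. rewrite (Rmax_right 0 x) by lra.
  specialize (Hdy (x + h) Hxh).
  replace (x + h - x) with h in Hdy by ring.
  specialize (Hdy ltac:(lra)).
  replace ((f (x + h) - f x) / h - f' x) with ((f (x + h) - f x - f' x * h) / h)
    by (field; auto).
  unfold Rdiv. rewrite Rabs_mult, Rabs_inv.
  assert (0 < Rabs h) by (apply Rabs_pos_lt; auto).
  apply Rle_lt_trans with (eps / 2 * Rabs h * / Rabs h).
  - apply Rmult_le_compat_r; [left; apply Rinv_0_lt_compat; auto| exact Hdy].
  - field_simplify; lra.
Qed.

Lemma ext0_cont f f' : C1_nonneg f f' -> forall x, continuous (ext0 f) x.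
Proof.
  intros H x. destruct (Rle_lt_dec 0 x) as [Hx|Hx].
  - apply (deriv_cont f f'); auto. apply H; auto.
  - apply cont_of_eps. intros eps He. exists (- x). split; [lra|].
    intros y Hy. unfold ext0. rewrite !Rmax_left.
    + rewrite Rminus_eq_0, Rabs_R0; lra.
    + lra.
    + destruct (Rcase_abs (y - x)); [rewrite Rabs_left in Hy|rewrite Rabs_right in Hy]; lra.
Qed.

Lemma ext0_pos sigma (ustar : Rbar) :
  Rbar_lt (Finite 0) ustar ->
  (forall s, 0 <= s -> Rbar_lt (Finite s) ustar -> 0 < sigma s) ->
  forall x : R, Rbar_lt x ustar -> 0 < ext0 sigma x.
Proof.
  intros Hus Hpos x Hx. unfold ext0. unfold Rmax. destruct (Rle_dec 0 x).
  - apply Hpos; auto.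
  - apply Hpos; [lra|auto].
Qed.

Section G.
Definition Gf (sigma : R -> R) (x : R) := RInt (fun s => / ext0 sigma s) 0 x.
End G.

Lemma invS_cont sigma sigma' ustar :
  C1_nonneg sigma sigma' -> Rbar_lt (Finite 0) ustar ->
  (forall s, 0 <= s -> Rbar_lt (Finite s) ustar -> 0 < sigma s) ->
  forall x : R, Rbar_lt x ustar -> continuous (fun s => / ext0 sigma s) x.
Proof.
  intros Hc Hus Hpos x Hx. apply continuous_Rinv_comp.
  - apply (ext0_cont _ _ Hc).
  - apply Rgt_not_eq, (ext0_pos sigma ustar Hus Hpos x Hx).
Qed.

Lemma invS_int sigma sigma' ustar :
  C1_nonneg sigma sigma' -> Rbar_lt (Finite 0) ustar ->
  (forall s, 0 <= s -> Rbar_lt (Finite s) ustar -> 0 < sigma s) ->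
  forall a b : R, Rbar_lt a ustar -> Rbar_lt b ustar ->
  ex_RInt (fun s => / ext0 sigma s) a b.
Proof.
  intros Hc Hus Hpos a b Ha Hb. apply (@ex_RInt_continuous R_CompleteNormedModule).
  intros z Hz. apply (invS_cont sigma sigma' ustar Hc Hus Hpos).
  apply Rbar_le_lt_trans with (Rmax a b).
  - simpl. apply Hz.
  - unfold Rmax; destruct (Rle_dec a b); auto.
Qed.

Lemma G_deriv sigma sigma' ustar :
  C1_nonneg sigma sigma' -> Rbar_lt (Finite 0) ustar ->
  (forall s, 0 <= s -> Rbar_lt (Finite s) ustar -> 0 < sigma s) ->
  forall x : R, Rbar_lt x ustar -> is_derive (Gf sigma) x (/ ext0 sigma x).
Proof.
  intros Hc Hus Hpos x Hx.
  apply (is_derive_RInt (fun s => / ext0 sigma s) (Gf sigma) 0 x).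
  - destruct (Rbar_lt_locally m_infty ustar x I Hx) as [d Hd].
    exists d. intros y Hy. apply (@RInt_correct R_CompleteNormedModule).
    apply (invS_int sigma sigma' ustar Hc Hus Hpos); auto.
    apply Hd. apply Hy.
  - apply (invS_cont sigma sigma' ustar Hc Hus Hpos x Hx).
Qed.

Lemma G_incr sigma sigma' ustar :
  C1_nonneg sigma sigma' -> Rbar_lt (Finite 0) ustar ->
  (forall s, 0 <= s -> Rbar_lt (Finite s) ustar -> 0 < sigma s) ->
  forall x y : R, x < y -> Rbar_lt y ustar -> Gf sigma x < Gf sigma y.
Proof.
  intros Hc Hus Hpos x y Hxy Hy.
  apply (incr_function (Gf sigma) m_infty ustar (fun x => / ext0 sigma x)); auto.
  - intros z _ Hz. apply (G_deriv sigma sigma' ustar Hc Hus Hpos z Hz).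
  - intros z _ Hz. apply Rlt_gt, Rinv_0_lt_compat.
    apply (ext0_pos sigma ustar Hus Hpos z Hz).
  - exact I.
Qed.

Lemma G_cont sigma sigma' ustar :
  C1_nonneg sigma sigma' -> Rbar_lt (Finite 0) ustar ->
  (forall s, 0 <= s -> Rbar_lt (Finite s) ustar -> 0 < sigma s) ->
  forall x : R, Rbar_lt x ustar -> continuous (Gf sigma) x.
Proof.
  intros Hc Hus Hpos x Hx. apply (@ex_derive_continuous R_AbsRing R_NormedModule).
  eexists. apply (G_deriv sigma sigma' ustar Hc Hus Hpos x Hx).
Qed.

Lemma G_Fsig sigma u : 0 <= u -> Fsig sigma u = Gf sigma u.
Proof.
  intros Hu. unfold Fsig, Gf. apply RInt_ext.
  intros x Hx. unfold ext0. rewrite Rmax_right; auto.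
  rewrite Rmin_left in Hx by lra. lra.
Qed.

Lemma G0 sigma : Gf sigma 0 = 0.
Proof. unfold Gf. rewrite RInt_point. reflexivity. Qed.

Lemma Rmin_cont u0 x : continuous (fun y => Rmin u0 y) x.
Proof.
  apply cont_of_eps. intros eps He. exists eps. split; auto.
  intros y Hy. unfold Rmin.
  destruct (Rle_dec u0 y), (Rle_dec u0 x);
  destruct (Rcase_abs (y - x)) as [Hn|Hn];
  try (rewrite Rabs_left in Hy by lra); try (rewrite Rabs_right in Hy by lra);
  try (rewrite Rminus_eq_0, Rabs_R0; lra).
  all: first [rewrite Rabs_left by lra; lra | rewrite Rabs_right by lra; lra].
Qed.

Lemma Finv_spec sigma sigma' (ustar : Rbar)
  (Hc : C1_nonneg sigma sigma')
  (Hus : Rbar_lt (Finite 0) ustar)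
  (Hpos : forall s, 0 <= s -> Rbar_lt (Finite s) ustar -> 0 < sigma s)
  (Hdiv : forall M : R, exists u0 : R, 0 <= u0 /\ Rbar_lt (Finite u0) ustar /\
          forall u, u0 <= u -> Rbar_lt (Finite u) ustar -> M <= Fsig sigma u) :
  forall v, 0 <= v ->
  0 <= Finv sigma ustar v /\ Rbar_lt (Finv sigma ustar v) ustar /\
  Gf sigma (Finv sigma ustar v) = v.
Proof.
  intros v Hv.
  assert (Hex : exists u, 0 <= u /\ Rbar_lt u ustar /\ Fsig sigma u = v).
  { destruct (Hdiv (v + 1)) as [u0 [Hu0 [Hu0s Hu0M]]].
    specialize (Hu0M u0 (Rle_refl _) Hu0s).
    rewrite G_Fsig in Hu0M by auto.
    set (h := fun x => Gf sigma (Rmin u0 x)).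
    assert (Hh : continuity h).
    { intros x. apply continuity_pt_filterlim.
      apply (continuous_comp (fun y => Rmin u0 y) (Gf sigma)).
      - apply Rmin_cont.
      - apply (G_cont sigma sigma' ustar Hc Hus Hpos).
        apply Rbar_le_lt_trans with u0; auto. simpl. apply Rmin_l. }
    assert (Hh0 : h 0 = 0).
    { unfold h. rewrite Rmin_right by lra. apply G0. }
    assert (Hh1 : h u0 = Gf sigma u0).
    { unfold h. rewrite Rmin_left by lra. auto. }
    destruct (IVT_gen h 0 u0 v Hh) as [x [Hx Hxv]].
    { rewrite Hh0, Hh1. rewrite Rmin_left by lra. rewrite Rmax_right by lra. lra. }
    rewrite Rmin_left in Hx by lra. rewrite Rmax_right in Hx by lra.
    exists x. split; [lra|]. split.
    - apply Rbar_le_lt_trans with u0; auto. simpl. lra.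
    - rewrite G_Fsig by lra. unfold h in Hxv. rewrite Rmin_right in Hxv by lra. auto. }
  pose proof (epsilon_spec (inhabits 0) _ Hex) as Hs.
  fold (Finv sigma ustar v) in Hs.
  destruct Hs as [H1 [H2 H3]]. split; auto. split; auto.
  rewrite <- G_Fsig; auto.
Qed.

Lemma phi_mono sigma sigma' (ustar : Rbar) mu
  (Hc : C1_nonneg sigma sigma')
  (Hus : Rbar_lt (Finite 0) ustar)
  (Hpos : forall s, 0 <= s -> Rbar_lt (Finite s) ustar -> 0 < sigma s)
  (Hnorm : forall s t, 0 <= s -> Rbar_le (Finite s) ustar ->
           0 <= t -> Rbar_le (Finite t) ustar ->
           Rabs (sigma s) + Rabs (sigma' t) <= mu) :
  forall u u', 0 <= u -> u <= u' -> Rbar_lt u' ustar ->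
  ln (sigma u) + mu * Gf sigma u <= ln (sigma u') + mu * Gf sigma u'.
Proof.
  intros u u' Hu Huu Hu'.
  set (phi := fun t => ln (ext0 sigma t) + mu * Gf sigma t).
  set (df := fun t => (sigma' t + mu) / ext0 sigma t).
  assert (Hlt : forall x, x <= u' -> Rbar_lt x ustar).
  { intros x Hx. apply Rbar_le_lt_trans with u'; auto. }
  destruct (MVT_gen phi u u' df) as [c [Hc1 Hc2]].
  - intros x Hx. rewrite Rmin_left in Hx by lra. rewrite Rmax_right in Hx by lra.
    assert (Hsx : 0 < ext0 sigma x) by (apply (ext0_pos sigma ustar Hus Hpos); apply Hlt; lra).
    pose proof (is_derive_comp ln (ext0 sigma) x _ _ (is_derive_ln _ Hsx)
       (deriv_int sigma sigma' x ltac:(lra) (proj1 (Hc x ltac:(lra))))) as H1.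
    pose proof (is_derive_scal _ x mu _
       (G_deriv sigma sigma' ustar Hc Hus Hpos x (Hlt x ltac:(lra)))) as H2.
    pose proof (is_derive_plus _ _ x _ _ H1 H2) as H3.
    replace (df x) with (plus (scal (sigma' x) (/ ext0 sigma x)) (mu * / ext0 sigma x)).
    + exact H3.
    + unfold df, plus, scal; simpl; unfold mult; simpl. field. lra.
  - intros x Hx. rewrite Rmin_left in Hx by lra. rewrite Rmax_right in Hx by lra.
    assert (Hsx : 0 < ext0 sigma x) by (apply (ext0_pos sigma ustar Hus Hpos); apply Hlt; lra).
    apply continuity_pt_filterlim.
    apply (continuous_plus (fun t => ln (ext0 sigma t)) (fun t => mu * Gf sigma t)).
    + apply (continuous_comp (ext0 sigma) ln).
      * apply (ext0_cont _ _ Hc).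
      * apply continuous_ln; auto.
    + apply (continuous_scal_r mu (Gf sigma)).
      apply (G_cont sigma sigma' ustar Hc Hus Hpos x (Hlt x ltac:(lra))).
  - rewrite Rmin_left in Hc1 by lra. rewrite Rmax_right in Hc1 by lra.
    assert (Hsc : 0 < ext0 sigma c) by (apply (ext0_pos sigma ustar Hus Hpos); apply Hlt; lra).
    assert (Hdc : 0 <= df c).
    { unfold df. apply Rmult_le_pos; [| left; apply Rinv_0_lt_compat; auto].
      assert (Hcs : Rbar_le c ustar) by (apply Rbar_lt_le, Hlt; lra).
      pose proof (Hnorm c c ltac:(lra) Hcs ltac:(lra) Hcs) as Hn.
      pose proof (Rabs_pos (sigma c)).
      pose proof (Rabs_maj2 (sigma' c)). lra. }
    assert (phi u <= phi u').
    { assert (0 <= df c * (u' - u)) by (apply Rmult_le_pos; lra). lra. }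
    unfold phi, ext0 in H. rewrite !Rmax_right in H by lra. exact H.
Qed.

Lemma Finv_mono sigma sigma' (ustar : Rbar)
  (Hc : C1_nonneg sigma sigma')
  (Hus : Rbar_lt (Finite 0) ustar)
  (Hpos : forall s, 0 <= s -> Rbar_lt (Finite s) ustar -> 0 < sigma s)
  (Hdiv : forall M : R, exists u0 : R, 0 <= u0 /\ Rbar_lt (Finite u0) ustar /\
          forall u, u0 <= u -> Rbar_lt (Finite u) ustar -> M <= Fsig sigma u) :
  forall v w, 0 <= v -> v <= w -> Finv sigma ustar v <= Finv sigma ustar w.
Proof.
  intros v w Hv Hvw.
  destruct (Finv_spec sigma sigma' ustar Hc Hus Hpos Hdiv v Hv) as [A1 [A2 A3]].
  destruct (Finv_spec sigma sigma' ustar Hc Hus Hpos Hdiv w ltac:(lra)) as [B1 [B2 B3]].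
  destruct (Rle_lt_dec (Finv sigma ustar v) (Finv sigma ustar w)) as [H|H]; auto.
  pose proof (G_incr sigma sigma' ustar Hc Hus Hpos _ _ H A2). lra.
Qed.

Lemma Finv_cont sigma sigma' (ustar : Rbar)
  (Hc : C1_nonneg sigma sigma')
  (Hus : Rbar_lt (Finite 0) ustar)
  (Hpos : forall s, 0 <= s -> Rbar_lt (Finite s) ustar -> 0 < sigma s)
  (Hdiv : forall M : R, exists u0 : R, 0 <= u0 /\ Rbar_lt (Finite u0) ustar /\
          forall u, u0 <= u -> Rbar_lt (Finite u) ustar -> M <= Fsig sigma u) :
  forall v, 0 <= v -> continuous (fun z => Finv sigma ustar (Rmax 0 z)) v.
Proof.
  intros v Hv. apply cont_of_eps. intros eps He.
  rewrite (Rmax_right 0 v Hv).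
  destruct (Finv_spec sigma sigma' ustar Hc Hus Hpos Hdiv v Hv) as [A1 [A2 A3]].
  set (u := Finv sigma ustar v) in *.
  destruct (Rbar_lt_locally m_infty ustar u I A2) as [d Hd].
  set (u2 := u + Rmin d eps / 2).
  set (u1 := u - eps / 2).
  pose proof (cond_pos d) as Hd0.
  assert (Hm : 0 < Rmin d eps) by (apply Rmin_pos; lra).
  pose proof (Rmin_l d eps). pose proof (Rmin_r d eps).
  assert (Hu2 : Rbar_lt u2 ustar).
  { apply Hd. unfold u2. replace (u + Rmin d eps / 2 - u) with (Rmin d eps / 2) by ring.
    rewrite Rabs_right; lra. }
  assert (G2 : v < Gf sigma u2).
  { rewrite <- A3. apply (G_incr sigma sigma' ustar Hc Hus Hpos); auto. unfold u2; lra. }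
  assert (G1 : Gf sigma u1 < v).
  { rewrite <- A3. apply (G_incr sigma sigma' ustar Hc Hus Hpos); auto. unfold u1; lra. }
  exists (Rmin (Gf sigma u2 - v) (v - Gf sigma u1)). split.
  { apply Rmin_pos; lra. }
  intros y Hy.
  pose proof (Rmin_l (Gf sigma u2 - v) (v - Gf sigma u1)).
  pose proof (Rmin_r (Gf sigma u2 - v) (v - Gf sigma u1)).
  pose proof (Rmax0_dist v y Hv) as Hw.
  set (w := Rmax 0 y) in *.
  assert (Hw0 : 0 <= w) by apply Rmax_l.
  destruct (Finv_spec sigma sigma' ustar Hc Hus Hpos Hdiv w Hw0) as [B1 [B2 B3]].
  set (x := Finv sigma ustar w) in *.
  assert (Hwv : Rabs (w - v) < Rmin (Gf sigma u2 - v) (v - Gf sigma u1)) by lra.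
  assert (Hx2 : x < u2).
  { destruct (Rlt_le_dec x u2) as [h|h]; auto. exfalso.
    assert (Gf sigma u2 <= Gf sigma x).
    { destruct (Req_dec u2 x) as [E|E]; [rewrite E; lra|].
      left. apply (G_incr sigma sigma' ustar Hc Hus Hpos); auto. lra. }
    rewrite Rabs_right in Hwv; lra. }
  assert (Hx1 : u1 < x).
  { destruct (Rlt_le_dec u1 x) as [h|h]; auto. exfalso.
    assert (Gf sigma x <= Gf sigma u1).
    { destruct (Req_dec u1 x) as [E|E]; [rewrite E; lra|].
      left. apply (G_incr sigma sigma' ustar Hc Hus Hpos); auto; [lra|].
      apply Rbar_le_lt_trans with u; [simpl; unfold u1; lra| auto]. }
    rewrite Rabs_left1 in Hwv; lra. }
  unfold u1, u2 in *.
  destruct (Rcase_abs (x - u)); [rewrite Rabs_left|rewrite Rabs_right]; lra.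
Qed.

Lemma a_cont sigma sigma' (ustar : Rbar)
  (Hc : C1_nonneg sigma sigma')
  (Hus : Rbar_lt (Finite 0) ustar)
  (Hpos : forall s, 0 <= s -> Rbar_lt (Finite s) ustar -> 0 < sigma s)
  (Hdiv : forall M : R, exists u0 : R, 0 <= u0 /\ Rbar_lt (Finite u0) ustar /\
          forall u, u0 <= u -> Rbar_lt (Finite u) ustar -> M <= Fsig sigma u) :
  forall v, 0 <= v -> continuous (ext0 (a_of sigma ustar)) v.
Proof.
  intros v Hv.
  apply (continuous_ext (fun z => ext0 sigma (Finv sigma ustar (Rmax 0 z)))).
  - intros z. unfold ext0, a_of. rewrite Rmax_right; auto.
    apply (Finv_spec sigma sigma' ustar Hc Hus Hpos Hdiv). apply Rmax_l.
  - apply (continuous_comp (fun z => Finv sigma ustar (Rmax 0 z)) (ext0 sigma)).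
    + apply (Finv_cont sigma sigma' ustar Hc Hus Hpos Hdiv v Hv).
    + apply (ext0_cont _ _ Hc).
Qed.

Definition hq (q s : R) : R := if Rlt_dec 0 s then Rpower s q else 0.

Lemma hq_cont q z : 0 < q -> 0 <= z -> continuous (hq q) z.
Proof.
  intros Hq Hz. destruct (Rle_lt_or_eq_dec 0 z Hz) as [Hz'|Hz'].
  - apply (continuous_ext_loc _ (fun s => exp (q * ln s))).
    + exists (mkposreal z Hz'). intros y Hy. unfold hq.
      unfold ball in Hy; simpl in Hy; unfold AbsRing_ball, abs, minus, plus, opp in Hy; simpl in Hy.
      destruct (Rlt_dec 0 y) as [h|h]; [reflexivity|].
      exfalso. destruct (Rcase_abs (y + - z)); [rewrite Rabs_left in Hy|rewrite Rabs_right in Hy]; lra.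
    + apply continuous_exp_comp.
      apply (continuous_scal_r q ln). apply continuous_ln; auto.
  - subst z. apply cont_of_eps. intros eps He.
    exists (exp (ln eps / q)). split; [apply exp_pos|].
    intros y Hy. unfold hq at 2. destruct (Rlt_dec 0 0) as [h|_]; [lra|].
    unfold hq. destruct (Rlt_dec 0 y) as [h|h].
    + rewrite Rminus_0_r in Hy. rewrite Rabs_right in Hy by lra.
      rewrite Rminus_0_r. unfold Rpower. rewrite Rabs_right by (left; apply exp_pos).
      apply Rlt_le_trans with (exp (ln eps)); [|rewrite exp_ln; lra].
      apply exp_increasing.
      pose proof (ln_increasing _ _ h Hy) as Hl. rewrite ln_exp in Hl.
      apply Rmult_lt_compat_l with (r := q) in Hl; auto.
      replace (q * (ln eps / q)) with (ln eps) in Hl by (field; lra). exact Hl.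
    + rewrite Rminus_0_r, Rabs_R0. lra.
Qed.

Lemma integrand_int (a : R -> R) p v :
  (forall z, 0 <= z -> continuous (ext0 a) z) ->
  (forall z, 0 <= z -> 0 < a z) -> 2 <= p -> 0 < v ->
  ex_RInt (fun s => Rpower s (p - 2) / a s) 0 v.
Proof.
  intros Hc Hp Hp2 Hv.
  assert (Hk : exists h : R -> R, (forall z, 0 <= z -> continuous h z) /\
             forall s, 0 < s -> h s = Rpower s (p - 2)).
  { destruct (Rle_lt_or_eq_dec 2 p Hp2) as [H|H].
    - exists (hq (p - 2)). split.
      + intros z Hz. apply hq_cont; lra.
      + intros s Hs. unfold hq. destruct (Rlt_dec 0 s); [auto|lra].
    - exists (fun _ => 1). split.
      + intros. apply continuous_const.
      + intros s Hs. subst p. replace (2 - 2) with 0 by ring. rewrite Rpower_O; auto. }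
  destruct Hk as [h [Hh1 Hh2]].
  apply (ex_RInt_ext (fun s => h s * / ext0 a s)).
  - intros x Hx. rewrite Rmin_left in Hx by lra. rewrite Rmax_right in Hx by lra.
    unfold ext0. rewrite Rmax_right by lra. rewrite Hh2 by lra. reflexivity.
  - apply (@ex_RInt_continuous R_CompleteNormedModule).
    intros z Hz. rewrite Rmin_left in Hz by lra. rewrite Rmax_right in Hz by lra.
    apply (continuous_mult h (fun s => / ext0 a s)).
    + apply Hh1; lra.
    + apply continuous_Rinv_comp.
      * apply Hc; lra.
      * apply Rgt_not_eq. unfold ext0. apply Hp. apply Rmax_l.
Qed.

Lemma exp_le_m x y : x <= y -> exp x <= exp y.
Proof. intros [H|H]; [left; apply exp_increasing; auto| subst; lra]. Qed.

Lemma ratio_gen (a : R -> R) mu : 0 <= mu ->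
  (forall v, 0 <= v -> 0 < a v) ->
  (forall v w, 0 <= v -> v <= w -> exp (- mu * (w - v)) <= a w / a v /\ a w / a v <= 1) ->
  forall v y, 0 <= v -> 0 <= v + y ->
     exp (- mu * Rabs y) <= a (v + y) / a v /\ a (v + y) / a v <= exp (mu * Rabs y).
Proof.
  intros Hmu Hp Hk v y Hv Hvy.
  destruct (Rle_lt_dec 0 y) as [Hy|Hy].
  - rewrite Rabs_right by lra.
    destruct (Hk v (v + y) Hv ltac:(lra)) as [H1 H2].
    replace (v + y - v) with y in H1 by ring. split; auto.
    apply Rle_trans with 1; auto.
    pose proof (exp_ineq1_le (mu * y)). assert (0 <= mu * y) by (apply Rmult_le_pos; lra). lra.
  - rewrite Rabs_left by lra.
    destruct (Hk (v + y) v Hvy ltac:(lra)) as [H1 H2].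
    replace (v - (v + y)) with (- y) in H1 by ring.
    pose proof (Hp v Hv). pose proof (Hp (v + y) Hvy).
    assert (E : a (v + y) / a v = / (a v / a (v + y))) by (field; lra).
    assert (Hr : 0 < a v / a (v + y)) by (apply Rdiv_lt_0_compat; lra).
    rewrite E. split.
    + apply Rle_trans with 1.
      * pose proof (exp_ineq1_le (mu * y)).
        replace (- mu * - y) with (mu * y) by ring.
        assert (mu * y <= 0) by (apply Rmult_le_0_l; lra).
        rewrite <- exp_0. apply exp_le_m. lra.
      * rewrite <- Rinv_1. apply Rinv_le_contravar; lra.
    + replace (mu * - y) with (- (- mu * - y)) by ring. rewrite exp_Ropp.
      apply Rinv_le_contravar; [apply exp_pos| exact H1].
Qed.

Lemma lim_gen (a : R -> R) p :
  (forall z, 0 <= z -> continuous (ext0 a) z) ->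
  (forall z, 0 <= z -> 0 < a z) ->
  (forall v w, 0 <= v -> v <= w -> a w <= a v) ->
  2 <= p ->
  is_lim (fun v => a v / Rpower v p *
                   RInt (fun s => Rpower s (p - 2) / a s) 0 v) p_infty 0.
Proof.
  intros Hc Hp Hm Hp2.
  apply (is_lim_le_le_loc (fun _ => 0) (fun v => / v)).
  - exists 1. intros v Hv.
    assert (Hi := integrand_int a p v Hc Hp Hp2 ltac:(lra)).
    pose proof (Hp v ltac:(lra)) as Hav.
    assert (HR0 : 0 <= RInt (fun s => Rpower s (p - 2) / a s) 0 v).
    { apply RInt_ge_0; [lra|auto|]. intros x Hx. unfold Rdiv.
      apply Rmult_le_pos; [left; apply exp_pos|left; apply Rinv_0_lt_compat, Hp; lra]. }
    assert (HR1 : RInt (fun s => Rpower s (p - 2) / a s) 0 v <=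
                  RInt (fun _ => Rpower v (p - 2) / a v) 0 v).
    { apply RInt_le; [lra|auto|apply ex_RInt_const|].
      intros x Hx. unfold Rdiv. apply Rmult_le_compat.
      - left; apply exp_pos.
      - left; apply Rinv_0_lt_compat, Hp; lra.
      - apply Rle_Rpower_l; lra.
      - apply Rinv_le_contravar; auto. apply Hm; lra. }
    rewrite RInt_const in HR1. unfold scal in HR1; simpl in HR1; unfold mult in HR1; simpl in HR1.
    assert (Hpv : Rpower v p = Rpower v (p - 2) * v ^ 2).
    { replace p with ((p - 2) + INR 2) at 1 by (simpl; ring).
      rewrite Rpower_plus, Rpower_pow by lra. reflexivity. }
    assert (Hq : 0 < Rpower v (p - 2)) by apply exp_pos.
    assert (Hc0 : 0 <= a v / Rpower v p).
    { rewrite Hpv. apply Rmult_le_pos; [lra|]. left; apply Rinv_0_lt_compat.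
      apply Rmult_lt_0_compat; [lra|]. apply pow_lt; lra. }
    split.
    + apply Rmult_le_pos; auto.
    + apply Rle_trans with (a v / Rpower v p * ((v - 0) * (Rpower v (p - 2) / a v))).
      * apply Rmult_le_compat_l; auto.
      * right. rewrite Hpv. field. repeat split; lra.
  - apply is_lim_const.
  - replace (Finite 0) with (Rbar_inv p_infty) by reflexivity.
    apply is_lim_inv; [apply is_lim_id | discriminate].
Qed.
Theorem lemma2p3
  (sigma dsigma : R -> R) (ustar : Rbar) (mu : R)
  (Hc1 : C1_nonneg sigma dsigma)
  (Hnn : forall s, 0 <= s -> 0 <= sigma s)
  (Hus : Rbar_lt (Finite 0) ustar)
  (Hzero : forall s, 0 <= s -> Rbar_le ustar (Finite s) -> sigma s = 0)
  (Hpos : forall s, 0 <= s -> Rbar_lt (Finite s) ustar -> 0 < sigma s)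
  (Hdec : forall s t, 0 <= s -> s <= t -> Rbar_lt (Finite t) ustar ->
          sigma t <= sigma s)
  (Hnorm : forall s t, 0 <= s -> Rbar_le (Finite s) ustar ->
           0 <= t -> Rbar_le (Finite t) ustar ->
           Rabs (sigma s) + Rabs (dsigma t) <= mu)
  (Hdiv : forall M : R, exists u0 : R, 0 <= u0 /\ Rbar_lt (Finite u0) ustar /\
          forall u, u0 <= u -> Rbar_lt (Finite u) ustar -> M <= Fsig sigma u) :
  (forall v, 0 <= v -> 0 < a_of sigma ustar v) /\
  (forall v w, 0 <= v -> v <= w -> a_of sigma ustar w <= a_of sigma ustar v) /\
  (forall v y, 0 <= v -> 0 <= v + y ->
     exp (- mu * Rabs y) <= a_of sigma ustar (v + y) / a_of sigma ustar v /\
     a_of sigma ustar (v + y) / a_of sigma ustar v <= exp (mu * Rabs y)) /\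
  (forall p : R, 2 <= p ->
     is_lim (fun v => a_of sigma ustar v / Rpower v p *
                      RInt (fun s => Rpower s (p - 2) / a_of sigma ustar s) 0 v)
            p_infty 0).
Proof.
  pose proof (Finv_spec sigma dsigma ustar Hc1 Hus Hpos Hdiv) as Hs.
  assert (Hmu : 0 <= mu).
  { pose proof (Hnorm 0 0 ltac:(lra) (Rbar_lt_le _ _ Hus) ltac:(lra) (Rbar_lt_le _ _ Hus)).
    pose proof (Rabs_pos (sigma 0)). pose proof (Rabs_pos (dsigma 0)). lra. }
  assert (P1 : forall v, 0 <= v -> 0 < a_of sigma ustar v).
  { intros v Hv. destruct (Hs v Hv) as [A1 [A2 A3]]. unfold a_of. apply Hpos; auto. }
  assert (P2 : forall v w, 0 <= v -> v <= w -> a_of sigma ustar w <= a_of sigma ustar v).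
  { intros v w Hv Hvw. destruct (Hs w ltac:(lra)) as [B1 [B2 B3]].
    unfold a_of. apply Hdec; auto.
    - apply (Hs v Hv).
    - apply (Finv_mono sigma dsigma ustar Hc1 Hus Hpos Hdiv); auto. }
  split; [exact P1|]. split; [exact P2|]. split.
  - apply ratio_gen; auto.
    intros v w Hv Hvw.
    pose proof (P1 v Hv). pose proof (P1 w ltac:(lra)). pose proof (P2 v w Hv Hvw).
    split.
    + destruct (Hs v Hv) as [A1 [A2 A3]]. destruct (Hs w ltac:(lra)) as [B1 [B2 B3]].
      pose proof (phi_mono sigma dsigma ustar mu Hc1 Hus Hpos Hnorm
         (Finv sigma ustar v) (Finv sigma ustar w) A1
         (Finv_mono sigma dsigma ustar Hc1 Hus Hpos Hdiv v w Hv Hvw) B2) as Hph.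
      rewrite A3, B3 in Hph. fold (a_of sigma ustar v) (a_of sigma ustar w) in Hph.
      rewrite <- (exp_ln (a_of sigma ustar w / a_of sigma ustar v))
        by (apply Rdiv_lt_0_compat; lra).
      apply exp_le_m. rewrite ln_div by lra. lra.
    + apply Rmult_le_reg_r with (a_of sigma ustar v); auto.
      unfold Rdiv. rewrite Rmult_assoc, Rinv_l by lra. lra.
  - intros p Hp. apply lim_gen; auto.
    apply (a_cont sigma dsigma ustar Hc1 Hus Hpos Hdiv).
Qed.
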